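(* Assume there exists a $1$-perfect code in $H(q+1,q)$. Let $f$ be a $(b,c)$-coloring of $H(n,q)$ with main eigenvalue $\lambda$ such that the set of vertices of color $1$ can be partitioned into $k$-faces. Then: (1) if $\lambda+k\le0$, then for every $t\in\{1,\dots,q\}$ there is a $(q(b+c)-tc,\ tc)$-coloring of $H(qn-\lambda-k,q)$, with main eigenvalue $\lambda-k(q-1)$; (2) if $\lambda\le k(q-1)$, then for every $t\in\{1,\dots,q\}$ there is a $(q(b+c)-tc,\ tc)$-coloring of $H(qn-\lambda+k(q-1),q)$, with main eigenvalue $\lambda+k(q-1)^2$.
   Context: The Hamming graph $H(n,q)$ has vertex set $\mathbb{Z}_q^n$, two vertices adjacent iff they differ in exactly one coordinate. A $k$-face is a set of vertices obtained by fixing $n-k$ coordinates and letting the other $k$ coordinates range over $\mathbb{Z}_q$. A $(b,c)$-coloring of $H(n,q)$ is a surjective map onto $\{1,2\}$ in which each color-1 vertex has exactly $b$ neighbours of color 2 and each color-2 vertex has exactly $c$ neighbours of color 1; its main eigenvalue is $\lambda=n(q-1)-(b+c)$. A $1$-perfect code in $H(n,q)$ is a set $C$ of vertices such that every radius-$1$ Hamming ball contains exactly one element of $C$. *)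

(* Defs.v *)
From HB Require Import structures.
From mathcomp Require Import all_boot all_order all_algebra.
Set Implicit Arguments. Unset Strict Implicit. Unset Printing Implicit Defensive.
Import Order.TTheory GRing.Theory Num.Theory.

(* Vertices of the Hamming graph H(n,q): words of length n over an alphabet
   of size q (Z_q is used only as a q-element set). *)
Definition hvert (n q : nat) := {ffun 'I_n -> 'I_q}.

Definition hdist (n q : nat) (x y : hvert n q) : nat := #|[set i | x i != y i]|.

Definition hadj (n q : nat) (x y : hvert n q) : bool := hdist x y == 1.

Definition perfect_code1 (n q : nat) (C : {set hvert n q}) : Prop :=
  forall x : hvert n q, #|[set y in C | hdist x y <= 1]| = 1.

(* A 2-coloring is encoded as f : hvert n q -> bool; color 1 = true,
   color 2 = false.  (b,c)-coloring: surjective, every color-1 vertex has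
   exactly b color-2 neighbours, every color-2 vertex has exactly c
   color-1 neighbours. *)
Definition bc_coloring (n q b c : nat) (f : hvert n q -> bool) : Prop :=
  [/\ (exists x, f x), (exists x, ~~ f x),
      (forall x, f x -> #|[set y | hadj x y & ~~ f y]| = b) &
      (forall x, ~~ f x -> #|[set y | hadj x y & f y]| = c)].

Definition main_eig (n q b c : nat) : int := (n * (q - 1))%:Z - (b + c)%:Z.

Definition kface (n q k : nat) (F : {set hvert n q}) : Prop :=
  exists (S : {set 'I_n}) (a : hvert n q),
    #|S| = k /\ F = [set x : hvert n q | [forall i : 'I_n, (i \notin S) ==> (x i == a i)]].

Definition kface_partitionable (n q k : nat) (f : hvert n q -> bool) : Prop :=
  exists P : {set {set hvert n q}},
    partition P [set x | f x] /\ (forall F, F \in P -> kface k F).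

(* Main.v *)
Require Import Defs.
From HB Require Import structures.
From mathcomp Require Import all_boot all_order all_algebra zify.
Import Order.TTheory GRing.Theory Num.Theory.

Set Implicit Arguments. Unset Strict Implicit. Unset Printing Implicit Defensive.

Section Ham.
Variables (J : finType) (T : finType).
Implicit Types x y : {ffun J -> T}.
Definition upd x (i : J) (v : T) : {ffun J -> T} :=
  [ffun j => if j == i then v else x j].
Definition gadj x y : bool := #|[set i | x i != y i]| == 1%N.

Lemma upd_same x i v : upd x i v i = v.
Proof. by rewrite ffunE eqxx. Qed.
Lemma upd_other x i v j : j != i -> upd x i v j = x j.
Proof. by rewrite ffunE => /negbTE ->. Qed.
Lemma upd_id x i : upd x i (x i) = x.
Proof. by apply/ffunP=> j; rewrite ffunE; case: eqP => // ->. Qed.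
Lemma upd_upd x i v w : upd (upd x i v) i w = upd x i w.
Proof. by apply/ffunP=> j; rewrite !ffunE; case: eqP. Qed.

Lemma gadj_upd x i v : gadj x (upd x i v) = (v != x i).
Proof.
rewrite /gadj; have [->|nv] := eqVneq v (x i).
  rewrite upd_id; apply/negbTE; rewrite neq_ltn; apply/orP; left.
  have -> : [set j | x j != x j] = set0 by apply/setP=> j; rewrite !inE eqxx.
  by rewrite cards0.
suff -> : [set j | x j != upd x i v j] = [set i] by rewrite cards1.
apply/setP=> j; rewrite !inE ffunE; have [->|nj] := eqVneq j i; last by rewrite eqxx.
by rewrite eq_sym nv.
Qed.



Lemma gadjP x y : gadj x y -> exists i, y = upd x i (y i) /\ y i != x i.
Proof.
rewrite /gadj => /cards1P [i Hi].
have : i \in [set i] by rewrite inE.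
rewrite -Hi inE eq_sym => ne; exists i; split => //.
apply/ffunP=> j; rewrite ffunE; case: eqP => [->//|/eqP nj].
apply/eqP; apply: contraR nj => nj; have : j \in [set i] by rewrite -Hi inE eq_sym.
by rewrite inE.
Qed.

Lemma gadj_sym x y : gadj x y = gadj y x.
Proof.
by rewrite /gadj; have -> : [set i | x i != y i] = [set i | y i != x i]
  by apply/setP=> j; rewrite !inE eq_sym.
Qed.

Lemma card_nbr x (P : pred {ffun J -> T}) :
  #|[set y | gadj x y & P y]| = \sum_i #|[set v | (v != x i) && P (upd x i v)]|.
Proof.
pose D := [set iv : J * T | (iv.2 != x iv.1) && P (upd x iv.1 iv.2)].
have -> : [set y | gadj x y & P y] = [set upd x iv.1 iv.2 | iv in D].
  apply/setP=> y; rewrite inE; apply/andP/imsetP.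
    case=> /gadjP [i [ey ne]] Py; exists (i, y i) => //.
    by rewrite inE /= ne -ey.
  case=> [[i v]]; rewrite inE /= => /andP [nv Pv] ->; split=> //.
  by rewrite gadj_upd.
rewrite card_in_imset; last first.
  move=> [i v] [i' v']; rewrite !inE /= => /andP [nv _] /andP [nv' _] e.
  have ei : i = i'.
    apply/eqP; apply: contraR nv => ni.
    by have := congr1 (fun f : {ffun J -> T} => f i) e; rewrite upd_same upd_other // => ->.
  subst i'; by have := congr1 (fun f : {ffun J -> T} => f i) e; rewrite !upd_same => ->.
rewrite -sum1dep_card big_mkcond /=.
rewrite (eq_bigr (fun p => (fun i v => if (v != x i) && P (upd x i v) then 1 else 0) p.1 p.2)%N) //.
rewrite -(pair_big xpredT xpredT (fun i v => if (v != x i) && P (upd x i v) then 1 else 0)%N) /=.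
apply eq_bigr => i _; rewrite -sum1dep_card [RHS]big_mkcond /=.
by apply eq_bigr => v _.
Qed.
End Ham.

Section Code.
Variable q : nat.
Local Notation V := {ffun 'I_q.+2 -> 'I_q.+1}.
Variable C : {set V}.
Hypothesis HC : perfect_code1 C.

Definition dset (x y : V) := [set i | x i != y i].

Lemma two_le_card (A : {set V}) c c' : c != c' -> c \in A -> c' \in A -> 2 <= #|A|.
Proof.
move=> ne cA c'A; have : [set c; c'] \subset A.
  by apply/subsetP=> y; rewrite !inE; case/orP=> /eqP ->.
by move/subset_leq_card; rewrite cards2 ne.
Qed.

Lemma code_dist c c' : c \in C -> c' \in C -> #|dset c c'| <= 2 -> c = c'.
Proof.
move=> cC c'C d2; apply/eqP; apply/negPn/negP => ne.
have [i ni] : exists i, c i != c' i.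
  apply/existsP; apply: contraR ne => /existsPn H; apply/eqP/ffunP=> i.
  by have:= H i; rewrite negbK => /eqP.
pose v := upd c i (c' i).
have := HC v.
have h1 : c \in [set y in C | hdist v y <= 1].
  rewrite inE cC /= /hdist.
  apply: (leq_trans (subset_leq_card (B:=[set i]) _)); last by rewrite cards1.
  apply/subsetP=> j; rewrite !inE ffunE; have [->|nj] := eqVneq j i; by rewrite ?eqxx.
have h2 : c' \in [set y in C | hdist v y <= 1].
  rewrite inE c'C /= /hdist.
  have: [set j | v j != c' j] \subset (dset c c') :\ i.
    apply/subsetP=> j; rewrite !inE ffunE; have [->|nj] := eqVneq j i; first by rewrite eqxx.
    by move=> ->.
  move/subset_leq_card => h; apply: leq_trans h _.
  have := cardsD1 i (dset c c'); rewrite inE ni => e.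
  by move: d2; rewrite e add1n ltnS.
by move=> e; have := two_le_card ne h1 h2; rewrite e.
Qed.

Lemma code_ext (u1 u2 : 'I_q.+2) (v : V) : u1 != u2 ->
  exists2 c, c \in C & forall i, i != u1 -> i != u2 -> c i = v i.
Proof.
move=> n12.
pose ext c := [forall i, (i != u1) ==> (i != u2) ==> (c i == v i)].
have [/existsP [c /andP [cC /forallP Hc]] | none] := boolP [exists c, (c \in C) && ext c].
  by exists c => // i h1 h2; have := Hc i; rewrite h1 h2 => /eqP.
exfalso.
pose w (ab : 'I_q.+1 * 'I_q.+1) := upd (upd v u1 ab.1) u2 ab.2.
have cw ab : exists c, c \in [set y in C | hdist (w ab) y <= 1].
  by apply/set0Pn; rewrite -card_gt0 HC.
pose cod ab := xchoose (cw ab).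
have codP ab : cod ab \in [set y in C | hdist (w ab) y <= 1] := xchooseP (cw ab).
pose idx ab := odflt u1 [pick i | (i != u1) && (i != u2) && (cod ab i != v i)].
have idxP ab : [/\ idx ab != u1, idx ab != u2 & forall j, j != idx ab -> cod ab j = w ab j].
  move: (codP ab); rewrite inE => /andP [cC hd].
  rewrite /idx; case: pickP => [i /andP[/andP[i1 i2] i3] | H]; last first.
    exfalso; move/negP: none; apply; apply/existsP; exists (cod ab); rewrite cC /=.
    apply/forallP=> i; apply/implyP=> i1; apply/implyP=> i2.
    by have := H i; rewrite i1 i2 /= => /negbFE.
  split=> // j nj; apply/eqP; move: hd; apply: contraLR => hj; rewrite -ltnNge /hdist.
  rewrite /= in nj.
  have wi : w ab i = v i by rewrite /w (upd_other _ _ i2) (upd_other _ _ i1).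
  have : #|[set i; j]| <= #|[set k | w ab k != cod ab k]|.
    apply: subset_leq_card; apply/subsetP=> k; rewrite !inE.
    by case/orP=> /eqP ->; rewrite ?wi eq_sym.
  by rewrite cards2 eq_sym nj.
clearbody idx cod.
pose F ab := (ab.1, idx ab).
have Finj : injective F.
  move=> [a b] [a' b'] [] /= ea ei; subst a'.
  have [i1 i2 e1] := idxP (a, b); have [_ _ e2] := idxP (a, b').
  rewrite -ei in e2.
  have ecod : cod (a, b) = cod (a, b').
    move: (codP (a,b)) (codP (a,b')); rewrite !inE => /andP[c1 _] /andP[c2 _].
    apply: code_dist => //.
    have : dset (cod (a, b)) (cod (a, b')) \subset [set idx (a, b); u2].
      apply/subsetP=> k; rewrite !inE; apply: contraR; rewrite negb_or => /andP[k1 k2].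
      by rewrite e1 // e2 // /w /= !ffunE (negbTE k2).
    move/subset_leq_card; rewrite cards2; case: (_ != _) => //= h.
    exact: leq_trans h _.
  have := congr1 (fun f : V => f u2) ecod.
  by rewrite e1 1?eq_sym // e2 1?eq_sym // /w !upd_same /= => ->.
have := card_imset [set: 'I_q.+1 * 'I_q.+1] Finj.
rewrite cardsT card_prod card_ord => e.
have : #|[set F ab | ab in [set: 'I_q.+1 * 'I_q.+1]]| <= #|setX [set: 'I_q.+1] (~: [set u1; u2])|.
  apply: subset_leq_card; apply/subsetP=> _ /imsetP [ab _ ->].
  have [i1 i2 _] := idxP ab; by rewrite !inE negb_or i1 i2.
rewrite e cardsX cardsT card_ord.
have := cardsC [set u1; u2]; rewrite cards2 n12 card_ord => e2.
have -> : #|~: [set u1; u2]| = q by lia.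
nia.
Qed.
End Code.

Section Gadget.
Variable q : nat.
Local Notation V := {ffun 'I_q.+2 -> 'I_q.+1}.
Local Notation W := {ffun 'I_q.+1 -> 'I_q.+1}.
Variable C : {set V}.
Hypothesis HC : perfect_code1 C.

Definition emb (p : 'I_q.+1) : 'I_q.+2 := widen_ord (leqnSn q.+1) p.
Lemma emb_inj : injective emb.
Proof. by move=> p p' /(congr1 val) /= /val_inj. Qed.
Lemma emb_max p : emb p != ord_max.
Proof. by rewrite -val_eqE /= neq_ltn ltn_ord. Qed.
Lemma emb0 p : (emb p == ord0) = (p == ord0).
Proof. by rewrite -!val_eqE. Qed.
Lemma coordP (i : 'I_q.+2) : i != ord_max -> i = emb (inord i).
Proof.
move=> ni; apply/val_inj; rewrite /= inordK //.
by have := ltn_ord i; move: ni; rewrite -val_eqE /= ltnS leq_eqVlt => /negbTE ->.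
Qed.
Lemma inord_emb p : inord (emb p) = p.
Proof. by apply/val_inj; rewrite /= inordK. Qed.

Lemma le1_diff (x y : V) i j : #|[set k | x k != y k]| <= 1 -> x i != y i -> j != i -> x j = y j.
Proof.
move=> h ni nj; apply/eqP; apply: contraTT h => nj'; rewrite -ltnNge.
have : [set i; j] \subset [set k | x k != y k].
  by apply/subsetP=> k; rewrite !inE; case/orP=> /eqP ->.
by move/subset_leq_card; rewrite cards2 eq_sym nj.
Qed.

Lemma eq_code c1 c2 (a b : 'I_q.+2) : c1 \in C -> c2 \in C ->
  (forall i, i != a -> i != b -> c1 i = c2 i) -> c1 = c2.
Proof.
move=> h1 h2 H; apply: (code_dist HC h1 h2).
have : dset c1 c2 \subset [set a; b].
  apply/subsetP=> k; rewrite !inE; apply: contraR; rewrite negb_or => /andP[ka kb].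
  by rewrite H.
move/subset_leq_card => h; apply: leq_trans h _; by rewrite cards2; case: (_ != _).
Qed.

Definition agree (c : V) (w : W) := [forall p, (p != ord0) ==> (c (emb p) == w p)].
Definition c0 : V := [ffun _ => ord0].
Definition cw (w : W) : V := odflt c0 [pick c in C | agree c w].

Lemma agreeP (c : V) (w : W) : reflect (forall p, p != ord0 -> c (emb p) = w p) (agree c w).
Proof.
apply: (iffP forallP) => H p.
  by move=> p0; have := H p; rewrite p0 => /eqP.
by apply/implyP=> /H ->.
Qed.

Lemma cw_ex (w : W) : exists2 c, c \in C & agree c w.
Proof.
have n12 : (ord0 : 'I_q.+2) != ord_max by rewrite -val_eqE.
have [c cC Hc] := code_ext HC [ffun i : 'I_q.+2 => w (inord i)] n12.
exists c => //; apply/agreeP=> p p0; rewrite Hc ?ffunE ?inord_emb ?emb0 //.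
exact: emb_max.
Qed.

Lemma cwP (w : W) : cw w \in C /\ agree (cw w) w.
Proof.
rewrite /cw; case: pickP => [c /andP[]// | H].
by have [c cC Ha] := cw_ex w; move: (H c); rewrite cC Ha.
Qed.

Lemma cw_uniq (c : V) (w : W) : c \in C -> agree c w -> cw w = c.
Proof.
move=> cC /agreeP ha; have [h1 /agreeP h2] := cwP w.
apply: (eq_code (a:=ord0) (b:=ord_max)) => // i i0 im.
rewrite (coordP im) h2 ?ha // -emb0 -coordP //.
Qed.

Lemma cw_upd0 (w : W) a : cw (upd w ord0 a) = cw w.
Proof.
have [h1 /agreeP h2] := cwP w.
by apply: cw_uniq => //; apply/agreeP=> p p0; rewrite upd_other // h2.
Qed.

Definition S (w : W) : 'I_q.+1 := (w ord0 - cw w ord0)%R.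
Definition H (w : W) : 'I_q.+1 := cw w ord_max.

Lemma S_upd0 (w : W) a : S (upd w ord0 a) = (a - cw w ord0)%R.
Proof. by rewrite /S cw_upd0 upd_same. Qed.

Lemma S_surj (w : W) s : S (upd w ord0 (s + cw w ord0)%R) = s.
Proof. by rewrite S_upd0 addrK. Qed.

Lemma cw_emb (w : W) p : p != ord0 -> cw w (emb p) = w p.
Proof. by have [_ /agreeP h] := cwP w; apply: h. Qed.

Lemma cw_eq_off (w1 w2 : W) p : (forall p', p' != p -> w1 p' = w2 p') ->
  cw w1 ord0 = cw w2 ord0 -> p != ord0 -> cw w1 = cw w2.
Proof.
move=> e e0 p0; have [h1 _] := cwP w1; have [h2 _] := cwP w2.
apply: (eq_code (a:=emb p) (b:=ord_max)) => // i ip im.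
have [->|i0] := eqVneq i ord0; first by [].
rewrite (coordP im) !cw_emb -?emb0 -?coordP //; apply: e.
by apply: contra ip => /eqP <-; rewrite -coordP.
Qed.

Lemma S_adj (w w' : W) : gadj w w' -> S w != S w'.
Proof.
case/gadjP=> p [e nv]; rewrite e; move: nv; move: (w' p) => v nv; clear e w'.
have [e0|p0] := eqVneq p ord0.
  subst p; rewrite S_upd0 /S; apply: contra nv => /eqP /addIr ->; by [].
apply/negP => /eqP eS.
have e0 : cw w ord0 = cw (upd w p v) ord0.
  move: eS; rewrite /S upd_other 1?eq_sym //.
  by move/addrI/oppr_inj.
have := cw_eq_off (w1 := w) (w2 := upd w p v) (p:=p) _ e0 p0.
move=> /(_ (fun p' h => esym (upd_other w v h))) /(congr1 (fun f : V => f (emb p))).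
by rewrite !cw_emb // upd_same => e; move: nv; rewrite e eqxx.
Qed.

Lemma nbrS_le (w : W) s' : #|[set w' | gadj w w' & S w' == s']| <= q.+1.
Proof.
rewrite card_nbr.
apply: (@leq_trans (\sum_(p : 'I_q.+1) 1)); last by rewrite sum1_card card_ord.
apply: leq_sum => p _; apply/card_le1_eqP => v1 v2; rewrite !inE => /andP[_ /eqP e1] /andP[_ /eqP e2].
have [e0|p0] := eqVneq p ord0.
  subst p; rewrite !S_upd0 in e1 e2; apply: (addIr (- cw w ord0)%R); by rewrite e1 e2.
have n0 : ord0 != p by rewrite eq_sym.
have e0 : cw (upd w p v1) ord0 = cw (upd w p v2) ord0.
  rewrite /S !(upd_other _ _ n0) in e1 e2; apply: oppr_inj; apply: (addrI (w ord0)); by rewrite e1 e2.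
have := cw_eq_off (w1 := upd w p v1) (w2 := upd w p v2) (p:=p) _ e0 p0.
move=> /(_ (fun p' h => etrans (upd_other w v1 h) (esym (upd_other w v2 h)))).
move=> /(congr1 (fun f : V => f (emb p))).
by rewrite !cw_emb // !upd_same.
Qed.

Lemma nbrS_surj (w : W) s' h : s' != S w -> exists w', [/\ gadj w w', S w' = s' & H w' = h].
Proof.
move=> ns.
have [eh|nh] := eqVneq h (cw w ord_max).
  exists (upd w ord0 (s' + cw w ord0)%R); split.
  - rewrite gadj_upd; apply: contra ns => /eqP e; by rewrite /S -e addrK.
  - exact: S_surj.
  - by rewrite /H cw_upd0 eh.
pose vt : V := [ffun i => if i == ord0 then (w ord0 - s')%R else if i == ord_max then h else w (inord i)].
have [c] : exists c, c \in [set y in C | hdist vt y <= 1].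
  by apply/set0Pn; rewrite -card_gt0 HC.
rewrite inE => /andP[cC hd].
have vt0 : vt ord0 = (w ord0 - s')%R by rewrite ffunE eqxx.
have n0m : (ord0 : 'I_q.+2) != ord_max by rewrite -val_eqE.
have vtm : vt ord_max = h by rewrite ffunE eq_sym (negbTE n0m) eqxx.
have vte p : p != ord0 -> vt (emb p) = w p.
  by move=> p0; rewrite ffunE emb0 (negbTE p0) (negbTE (emb_max p)) inord_emb.
have cm : c ord_max = h.
  apply/eqP; apply: contraTT ns => ncm; rewrite negbK.
  have ag : agree c w.
    apply/agreeP=> p p0; rewrite -(vte p p0); symmetry; apply: (le1_diff hd (i:=ord_max)).
      by rewrite vtm eq_sym.
    exact: emb_max.
  have ec := cw_uniq cC ag.
  have e0 : vt ord0 = c ord0 by apply: (le1_diff hd (i:=ord_max)); [rewrite vtm eq_sym | ].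
  by rewrite /S ec -e0 vt0 subKr.
have c0e : c ord0 = (w ord0 - s')%R.
  apply/eqP; apply: contraTT nh => nc0; rewrite negbK.
  have ag : agree c w.
    apply/agreeP=> p p0; rewrite -(vte p p0); symmetry; apply: (le1_diff hd (i:=ord0)).
      by rewrite vt0 eq_sym.
    by rewrite emb0.
  by rewrite (cw_uniq cC ag) cm.
have [/existsP [p /andP [p0 np]] | nex] := boolP [exists p, (p != ord0) && (c (emb p) != w p)]; last first.
  have ag : agree c w.
    by apply/agreeP=> p p0; apply/eqP; move/existsPn: nex => /(_ p); rewrite p0 /= negbK.
  by move: nh; rewrite (cw_uniq cC ag) cm eqxx.
pose w' := upd w p (c (emb p)).
have ag : agree c w'.
  apply/agreeP=> p' p'0; have [->|np'] := eqVneq p' p; first by rewrite upd_same.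
  rewrite upd_other // -(vte p' p'0); symmetry; apply: (le1_diff hd (i:=emb p)).
    by rewrite vte // eq_sym.
  by apply: contra np' => /eqP /emb_inj ->.
have ecw := cw_uniq cC ag.
exists w'; split.
- by rewrite gadj_upd.
- by rewrite /S ecw c0e upd_other 1?eq_sym // subKr.
- by rewrite /H ecw cm.
Qed.

Lemma gadget_card (w : W) s' (R : pred 'I_q.+1) : s' != S w ->
  #|[set w' | gadj w w' & (S w' == s') && R (H w')]| = #|[set u | R u]|.
Proof.
move=> ns; set N := [set w' | gadj w w' & S w' == s'].
have surj u : u \in H @: N.
  have [w' [a b c]] := nbrS_surj u ns; apply/imsetP; exists w' => //; by rewrite inE a b eqxx.
have cH : #|H @: N| = q.+1.
  have -> : H @: N = setT by apply/setP=> u; rewrite inE surj.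
  by rewrite cardsT card_ord.
have inj : {in N &, injective H}.
  by apply/imset_injP; rewrite eqn_leq leq_imset_card cH nbrS_le.
have -> : [set w' | gadj w w' & (S w' == s') && R (H w')] = [set w' in N | R (H w')].
  by apply/setP=> w'; rewrite !inE andbA.
rewrite -(card_in_imset (f:=H)); last first.
  by move=> a b /setIdP[aN _] /setIdP[bN _]; apply: inj.
apply: eq_card => u; rewrite [in RHS]inE; apply/imsetP/idP => [[w'] | Ru].
  by rewrite inE => /andP[_ Rw] ->.
have /imsetP [w' wN eu] := surj u; exists w' => //; by rewrite inE wN -eu Ru.
Qed.
End Gadget.

Lemma card_part (A : finType) (K : finType) (F : A -> K) (P : pred A) :
  #|[set y | P y]| = \sum_s #|[set y | (F y == s) && P y]|.
Proof.
rewrite -sum1dep_card (partition_big F xpredT) //=.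
apply: eq_bigr => s _; rewrite -sum1dep_card; apply: eq_bigl => y; by rewrite andbC.
Qed.

Lemma card_rm (A : finType) (a : A) (P : pred A) :
  #|[set v | (v != a) && P v]| = #|[set v | P v]| - P a.
Proof.
rewrite (cardsD1 a [set v | P v]) inE.
have -> : [set v | P v] :\ a = [set v | (v != a) && P v] by apply/setP=> v; rewrite !inE.
by case: (P a); rewrite ?add1n ?subSS ?subn0.
Qed.

Lemma sum_ind (A : finType) (Pr P : pred A) (K : nat) :
  \sum_(s | Pr s) (P s * K) = #|[set s | Pr s && P s]| * K.
Proof.
rewrite -sum1dep_card big_distrl /= big_mkcond [RHS]big_mkcond /=.
by apply: eq_bigr => s _; case: (Pr s); case: (P s); rewrite ?mul1n ?mul0n.
Qed.

Lemma card_neq (A : finType) (a : A) : #|[set s | s != a]| = #|A|.-1.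
Proof. by rewrite -(cardsC1 a); apply: eq_card => s; rewrite !inE. Qed.

Section Main.
Variables (n q : nat).
Local Notation Q := 'I_q.+1.
Local Notation X := {ffun 'I_n -> 'I_q.+1}.
Local Notation W := {ffun 'I_q.+1 -> 'I_q.+1}.
Variable C : {set {ffun 'I_q.+2 -> 'I_q.+1}}.
Hypothesis HC : perfect_code1 C.
Variable f : X -> bool.
Variable D : X -> {set 'I_n}.
Hypothesis face : forall x j v, f x -> j \in D x -> f (upd x j v) /\ D (upd x j v) = D x.
Variables (e : bool) (r : nat) (T : {set Q}).

Local Notation Iy := (('I_n * 'I_q.+1) + 'I_r)%type.
Local Notation YY := {ffun Iy -> 'I_q.+1}.
Definition blk (Y : YY) j : W := [ffun p => Y (inl (j, p))].
Definition xo (Y : YY) : X := [ffun j => S C (blk Y j)].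
Definition cont (d : bool) (w : W) : Q := if d then (if e then S C w else 0%R) else H C w.
Definition zs (Y : YY) : Q := (\sum_z Y (inr z))%R.
Definition hh (Y : YY) : Q := (\sum_j cont (j \in D (xo Y)) (blk Y j) + zs Y)%R.
Definition g (Y : YY) : bool := f (xo Y) && (hh Y \in T).
Definition setb (Y : YY) j (w : W) : YY :=
  [ffun i => match i with inl (j', p) => if j' == j then w p else Y i | inr _ => Y i end].

Lemma upd_inl Y j p v : upd Y (inl (j,p)) v = setb Y j (upd (blk Y j) p v).
Proof.
apply/ffunP=> [[[j' p']|z]]; rewrite !ffunE //.
have [->|nj] := eqVneq j' j; have [->|np] := eqVneq p' p; rewrite ?eqxx //= ?ffunE.
- by case: eqP => // -[ep]; move: np; rewrite ep eqxx.
- by case: eqP => // -[ej]; move: nj; rewrite ej eqxx.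
- by case: eqP => // -[ej ep]; move: nj; rewrite ej eqxx.
Qed.

Lemma blk_setb Y j w j' : blk (setb Y j w) j' = if j' == j then w else blk Y j'.
Proof. by apply/ffunP=> p; rewrite !ffunE; case: eqP => // ; rewrite ffunE. Qed.

Lemma xo_setb Y j w : xo (setb Y j w) = upd (xo Y) j (S C w).
Proof. by apply/ffunP=> j'; rewrite !ffunE blk_setb; case: eqP. Qed.

Lemma zs_setb Y j w : zs (setb Y j w) = zs Y.
Proof. by apply: eq_bigr => z _; rewrite ffunE. Qed.

Lemma xo_j Y j : xo Y j = S C (blk Y j).
Proof. by rewrite ffunE. Qed.

Definition Aof (Y : YY) j (x' : X) : Q :=
  (\sum_(j' | j' != j) cont (j' \in D x') (blk Y j') + zs Y)%R.

Lemma hh_setb Y j w : hh (setb Y j w) =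
  (Aof Y j (upd (xo Y) j (S C w)) + cont (j \in D (upd (xo Y) j (S C w))) w)%R.
Proof.
rewrite /hh /Aof xo_setb zs_setb (bigD1 j) //= blk_setb eqxx.
rewrite [RHS]addrC addrA; congr (_ + _ + _)%R.
by apply: eq_bigr => j' nj; rewrite blk_setb (negbTE nj).
Qed.

Lemma hh_Y Y j : hh Y = (Aof Y j (xo Y) + cont (j \in D (xo Y)) (blk Y j))%R.
Proof. by rewrite /hh /Aof (bigD1 j) //= [RHS]addrC addrA. Qed.

Lemma xo_updz Y z v : xo (upd Y (inr z) v) = xo Y.
Proof. by apply/ffunP=> j; rewrite !ffunE; congr (S C _); apply/ffunP=> p; rewrite !ffunE. Qed.

Lemma hh_updz Y z v : hh (upd Y (inr z) v) = (hh Y - Y (inr z) + v)%R.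
Proof.
rewrite /hh xo_updz.
have eb j : blk (upd Y (inr z) v) j = blk Y j by apply/ffunP=> p; rewrite !ffunE.
under eq_bigr => j _ do rewrite eb.
rewrite /zs (bigD1 z) //= [in RHS](bigD1 z) //= ffunE eqxx.
have -> : (\sum_(i | i != z) upd Y (inr z) v (inr i) = \sum_(i | i != z) Y (inr i))%R.
  apply: eq_bigr => i ni; rewrite ffunE; case: eqP => // -[ei]; by rewrite ei eqxx in ni.
set a := (\sum_(j < n) _)%R; set b := (\sum_(i < r | i != z) _)%R.
by rewrite [(Y (inr z) + b)%R]addrC [in RHS]addrA addrK [(v + b)%R]addrC addrA.
Qed.

Definition tv (b : bool) : nat := if b then #|T| else q.+1 - #|T|.

Lemma transl (A0 : Q) b : #|[set u : Q | (A0 + u \in T)%R == b]| = tv b.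
Proof.
have inj : injective (+%R A0) by apply: addrI.
case: b => /=.
  have -> : [set u : Q | (A0 + u \in T)%R == true] = (+%R A0) @^-1: T.
    by apply/setP=> u; rewrite !inE eqb_id.
  by rewrite card_preimset.
have -> : [set u : Q | (A0 + u \in T)%R == false] = ~: ((+%R A0) @^-1: T).
  by apply/setP=> u; rewrite !inE eqbF_neg.
have := cardsC ((+%R A0) @^-1: T); rewrite card_preimset // card_ord.
move=> E; rewrite -[X in X - _]E addKn; by apply: eq_card.
Qed.

Lemma constc (b : bool) : #|[set u : Q | b]| = (b * q.+1)%N.
Proof.
case: b; last by rewrite mul0n; apply/eqP; rewrite cards_eq0; apply/eqP/setP=> u; rewrite !inE.
by rewrite mul1n -[RHS](card_ord q.+1); apply: eq_card => u; rewrite inE.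
Qed.

Definition Nv (Y : YY) j (s' : Q) b : nat :=
  let x' := upd (xo Y) j s' in
  if f x' then (if j \in D x' then
      ((((Aof Y j x' + (if e then s' else 0)) \in T)%R == b) * q.+1)%N
    else tv b)
  else ((~~ b) * q.+1)%N.

Lemma blk_count Y j b :
  #|[set w | gadj (blk Y j) w & (g (setb Y j w) == b)]| = \sum_(s' | s' != xo Y j) Nv Y j s' b.
Proof.
rewrite (card_part (S C)) (bigD1 (xo Y j)) //=.
have -> : #|[set w | (S C w == xo Y j) && (gadj (blk Y j) w && (g (setb Y j w) == b))]| = 0.
  apply/eqP; rewrite cards_eq0; apply/eqP/setP => w; rewrite !inE xo_j.
  apply/negbTE; apply/negP => /and3P [/eqP ew ad _]; by move: (S_adj HC ad); rewrite ew eqxx.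
rewrite add0n; apply: eq_bigr => s' ns.
rewrite xo_j in ns.
pose x' := upd (xo Y) j s'.
pose R := fun u : Q => (f x' && ((Aof Y j x' + (if j \in D x' then (if e then s' else 0) else u))%R \in T)) == b.
have -> : [set w | (S C w == s') && (gadj (blk Y j) w && (g (setb Y j w) == b))]
    = [set w | gadj (blk Y j) w & (S C w == s') && R (H C w)].
  apply/setP=> w; rewrite !inE.
  have [ew|new] := eqVneq (S C w) s'; last by rewrite /= andbF.
  by rewrite /= /g xo_setb hh_setb ew /R /cont ew.
rewrite (gadget_card HC R ns) /Nv -/x' /R.
case: (f x'); case: (j \in D x') => /=; rewrite ?transl ?constc //; by case: b.
Qed.

Definition cnt (Y : YY) b := #|[set Y' | gadj Y Y' & g Y' == b]|.

Lemma cnt_eq Y b : cnt Y b = (\sum_j \sum_(s' | s' != xo Y j) Nv Y j s' b +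
   \sum_(z : 'I_r) #|[set v | (v != Y (inr z)) && (g (upd Y (inr z) v) == b)]|)%N.
Proof.
rewrite /cnt card_nbr big_sumType /=; congr (_ + _)%N.
rewrite (eq_bigr (fun jp => (fun j p => #|[set v | (v != Y (inl (j, p))) && (g (upd Y (inl (j, p)) v) == b)]|) jp.1 jp.2)); last by case.
rewrite -(pair_bigA _ (fun j p => #|[set v | (v != Y (inl (j, p))) && (g (upd Y (inl (j, p)) v) == b)]|)) /=.
apply: eq_bigr => j _; rewrite -blk_count card_nbr.
by apply: eq_bigr => p _; apply: eq_card => v; rewrite !inE upd_inl ffunE.
Qed.

Lemma z_count (Y : YY) (z : 'I_r) (b : bool) : #|[set v | (v != Y (inr z)) && (g (upd Y (inr z) v) == b)]| =
  if f (xo Y) then tv b - ((hh Y \in T) == b) else ((~~b) * q)%N.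
Proof.
have -> : [set v | (v != Y (inr z)) && (g (upd Y (inr z) v) == b)] =
  [set v | (v != Y (inr z)) && ((f (xo Y) && ((hh Y - Y (inr z) + v)%R \in T)) == b)].
  by apply/setP=> v; rewrite !inE /g xo_updz hh_updz.
rewrite (card_rm (Y (inr z)) (fun v => (f (xo Y) && ((hh Y - Y (inr z) + v)%R \in T)) == b)) /= subrK.
case: (f (xo Y)) => /=.
  rewrite -(transl (hh Y - Y (inr z))%R b); congr (_ - _); by apply: eq_card => v; rewrite !inE.
have -> : (false == b) = ~~ b by case: b.
rewrite (_ : #|_| = #|[set u : Q | ~~ b]|); last by apply: eq_card => v; rewrite !inE; case: b.
rewrite constc; case: b => /=; by rewrite ?mul1n ?mul0n ?subn1.
Qed.

Definition aj (x : X) j := #|[set s' | (s' != x j) && f (upd x j s')]|.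
Definition bj (x : X) j := #|[set s' | (s' != x j) && ~~ f (upd x j s')]|.

Lemma ab_q x j : (aj x j + bj x j = q)%N.
Proof.
rewrite /aj /bj -!sum1dep_card.
rewrite -(bigID (fun s' => f (upd x j s')) (fun s' => s' != x j) (fun _ => 1%N)) /=.
by rewrite sum1dep_card card_neq card_ord.
Qed.

Lemma sum_aj x : (\sum_j aj x j = #|[set x' | gadj x x' & f x']|)%N.
Proof. by rewrite card_nbr. Qed.
Lemma sum_bj x : (\sum_j bj x j = #|[set x' | gadj x x' & ~~ f x']|)%N.
Proof. by rewrite card_nbr. Qed.

Lemma abD x j : f x -> j \in D x -> aj x j = q /\ bj x j = 0%N.
Proof.
move=> fx jx.
have b0 : bj x j = 0%N.
  apply/eqP; rewrite cards_eq0; apply/eqP/setP=> s'; rewrite !inE.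
  by have [-> _] := face s' fx jx; rewrite andbF.
by split=> //; have := ab_q x j; rewrite b0 addn0.
Qed.

Lemma face_back x j s' : f (upd x j s') -> j \in D (upd x j s') -> f x /\ D x = D (upd x j s').
Proof.
move=> fx jx; have := face (x j) fx jx; by rewrite upd_upd upd_id.
Qed.

Lemma sumN Y j b : ~~ (f (xo Y) && (j \in D (xo Y))) ->
  \sum_(s' | s' != xo Y j) Nv Y j s' b = (aj (xo Y) j * tv b + bj (xo Y) j * ((~~b) * q.+1))%N.
Proof.
move=> hj.
have E s' : s' != xo Y j -> Nv Y j s' b =
    (f (upd (xo Y) j s') * tv b + (~~ f (upd (xo Y) j s')) * ((~~b) * q.+1))%N.
  move=> ns; rewrite /Nv; case fx: (f _) => /=; last by rewrite mul0n add0n mul1n.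
  case dx: (j \in D _); last by rewrite mul1n mul0n addn0.
  have [fx0 ex] := face_back fx dx.
  by move: hj; rewrite fx0 ex dx.
by rewrite (eq_bigr _ E) big_split /= !sum_ind.
Qed.

Lemma sumD Y j b : f (xo Y) -> j \in D (xo Y) ->
  \sum_(s' | s' != xo Y j) Nv Y j s' b =
  if e then (q.+1 * (tv b - ((hh Y \in T) == b)))%N else (q * (((hh Y \in T) == b) * q.+1))%N.
Proof.
move=> hf hj.
pose A := (hh Y - (if e then xo Y j else 0))%R.
have E s' : Nv Y j s' b = ((((A + (if e then s' else 0))%R \in T) == b) * q.+1)%N.
  have [fx' dx'] := face s' hf hj.
  rewrite /Nv fx' dx' hj; congr (nat_of_bool (_ == b) * _)%N; congr (_ \in T); congr (_ + _)%R.
  rewrite /A (hh_Y Y j) /Aof dx' /cont hj -xo_j; by rewrite addrK.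
rewrite (eq_bigr _ (fun s' _ => E s')) sum_ind.
have [He|He] := boolP e.
  rewrite mulnC (card_rm (xo Y j) (fun s' => ((A + s')%R \in T) == b)).
  rewrite -(transl A b) {2}/A He subrK; congr (_ * (_ - _))%N.
rewrite /A (negbTE He) subr0 addr0; case: ((hh Y \in T) == b) => /=.
  rewrite (_ : #|_| = #|[set s' | s' != xo Y j]|); last by apply: eq_card => u; rewrite !inE andbT.
  by rewrite card_neq card_ord mul1n.
rewrite (_ : #|_| = 0%N) ?muln0 //; apply/eqP; rewrite cards_eq0; apply/eqP/setP=> u; by rewrite !inE andbF.
Qed.

Lemma cnt_nf Y b : ~~ f (xo Y) ->
  cnt Y b = ((\sum_j aj (xo Y) j) * tv b + (\sum_j bj (xo Y) j) * ((~~b) * q.+1) + r * ((~~b) * q))%N.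
Proof.
move=> nf; rewrite cnt_eq.
rewrite (eq_bigr (fun j => aj (xo Y) j * tv b + bj (xo Y) j * ((~~b) * q.+1))%N); last first.
  by move=> j _; rewrite sumN // (negbTE nf).
rewrite big_split /= -!big_distrl /=.
rewrite [\sum_(z < r) _](eq_bigr (fun _ => ((~~b) * q)%N)); last by move=> z _; rewrite z_count (negbTE nf).
by rewrite sum_nat_const card_ord.
Qed.

Lemma cnt_f Y b : f (xo Y) ->
  cnt Y b = (#|D (xo Y)| * (if e then q.+1 * (tv b - ((hh Y \in T) == b)) else q * (((hh Y \in T) == b) * q.+1)) +
     ((\sum_(j | j \notin D (xo Y)) aj (xo Y) j) * tv b +
      (\sum_(j | j \notin D (xo Y)) bj (xo Y) j) * ((~~b) * q.+1)) +
     r * (tv b - ((hh Y \in T) == b)))%N.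
Proof.
move=> fx; rewrite cnt_eq (bigID (fun j => j \in D (xo Y))) /=.
rewrite (eq_bigr (fun _ => if e then q.+1 * (tv b - ((hh Y \in T) == b)) else q * (((hh Y \in T) == b) * q.+1))%N); last first.
  by move=> j jD; rewrite sumD.
rewrite sum_nat_const.
rewrite (eq_bigr (fun j => aj (xo Y) j * tv b + bj (xo Y) j * ((~~b) * q.+1))%N); last first.
  by move=> j jD; rewrite sumN // (negbTE jD) andbF.
rewrite big_split /= -!big_distrl /=.
rewrite [\sum_(z < r) _](eq_bigr (fun _ => tv b - ((hh Y \in T) == b))%N); last by move=> z _; rewrite z_count fx.
by rewrite sum_nat_const card_ord.
Qed.

Lemma aj_split x : f x -> (\sum_j aj x j = #|D x| * q + \sum_(j | j \notin D x) aj x j)%N.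
Proof.
move=> fx; rewrite (bigID (fun j => j \in D x)) /=; congr (_ + _)%N.
rewrite (eq_bigr (fun _ => q)); first by rewrite sum_nat_const.
by move=> j jD; have [-> _] := abD fx jD.
Qed.

Lemma bj_split x : f x -> (\sum_j bj x j = \sum_(j | j \notin D x) bj x j)%N.
Proof.
move=> fx; rewrite (bigID (fun j => j \in D x)) /=.
rewrite big1 ?add0n // => j jD; by have [_ ->] := abD fx jD.
Qed.

Lemma ab_sum x : (\sum_j aj x j + \sum_j bj x j = n * q)%N.
Proof.
rewrite -big_split /= (eq_bigr (fun _ => q)); last by move=> j _; rewrite ab_q.
by rewrite sum_nat_const card_ord.
Qed.

Variables (b0 c0 k : nat).
Hypothesis Hb : forall x, f x -> #|[set x' | gadj x x' & ~~ f x']| = b0.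
Hypothesis Hc : forall x, ~~ f x -> #|[set x' | gadj x x' & f x']| = c0.
Hypothesis Hk : forall x, f x -> #|D x| = k.
Hypothesis Hr : (r + e * (k * q.+1) + n * q = c0 + b0 + k * q)%N.
Hypothesis Ht : #|T| <= q.+1.

Lemma V1 Y : ~~ f (xo Y) -> cnt Y true = (#|T| * c0)%N.
Proof.
move=> nf; rewrite cnt_nf // sum_aj Hc //= /tv; lia.
Qed.

Lemma V2 Y : f (xo Y) -> hh Y \notin T -> cnt Y true = (#|T| * c0)%N.
Proof.
move=> fx hT; rewrite cnt_f // (negbTE hT) Hk //= /tv subn0.
have h1 := aj_split fx; have h2 := bj_split fx; have h3 := ab_sum (xo Y).
rewrite sum_aj sum_bj Hb // Hk // in h1 h2 h3.
set SA := (\sum_(j | j \notin D (xo Y)) aj (xo Y) j)%N in h1 *.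
set SB := (\sum_(j | j \notin D (xo Y)) bj (xo Y) j)%N in h2 *.
have hc : c0 = (e * (k * q.+1) + SA + r)%N by lia.
rewrite hc -h2; case: e => /=; nia.
Qed.

Lemma V3 Y : f (xo Y) -> hh Y \in T -> cnt Y false = (q.+1 * b0 + (q.+1 - #|T|) * c0)%N.
Proof.
move=> fx hT; rewrite cnt_f // hT Hk //= /tv subn0.
have h1 := aj_split fx; have h2 := bj_split fx; have h3 := ab_sum (xo Y).
rewrite sum_aj sum_bj Hb // Hk // in h1 h2 h3.
set SA := (\sum_(j | j \notin D (xo Y)) aj (xo Y) j)%N in h1 *.
set SB := (\sum_(j | j \notin D (xo Y)) bj (xo Y) j)%N in h2 *.
have hc : c0 = (e * (k * q.+1) + SA + r)%N by lia.
rewrite hc -h2; case: e => /=; nia.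
Qed.
End Main.

Definition bcg (J T : finType) (B Cc : nat) (G : {ffun J -> T} -> bool) : Prop :=
  [/\ (exists x, G x), (exists x, ~~ G x),
      (forall x, G x -> #|[set y | gadj x y & ~~ G y]| = B) &
      (forall x, ~~ G x -> #|[set y | gadj x y & G y]| = Cc)].

Section Transfer.
Variables (J : finType) (Q : nat).
Local Notation YY := {ffun J -> 'I_Q}.
Local Notation HV := (hvert #|J| Q).
Definition Phi (y : HV) : YY := [ffun a => y (enum_rank a)].
Definition Psi (Y : YY) : HV := [ffun i => Y (enum_val i)].
Lemma PhiK : cancel Phi Psi.
Proof. by move=> y; apply/ffunP=> i; rewrite !ffunE enum_valK. Qed.
Lemma PsiK : cancel Psi Phi.
Proof. by move=> Y; apply/ffunP=> a; rewrite !ffunE enum_rankK. Qed.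

Lemma hadj_Phi (x y : HV) : hadj x y = gadj (Phi x) (Phi y).
Proof.
rewrite /hadj /hdist /gadj; congr (_ == _).
rewrite -(card_imset _ (@enum_rank_inj J)); apply: eq_card => i; rewrite !inE.
apply/idP/imsetP => [ne | [a]]; last by rewrite inE !ffunE => h ->.
by exists (enum_val i); rewrite ?inE ?enum_valK // !ffunE enum_valK.
Qed.

Lemma card_Phi (x : HV) (P : pred YY) :
  #|[set y | hadj x y & P (Phi y)]| = #|[set Y | gadj (Phi x) Y & P Y]|.
Proof.
rewrite -(card_imset _ (can_inj PhiK)); apply: eq_card => Y; rewrite !inE.
apply/imsetP/idP => [[y] | h].
  by rewrite inE hadj_Phi => /andP[a b] ->; rewrite a b.
exists (Psi Y); last by rewrite PsiK.
by rewrite inE hadj_Phi PsiK.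
Qed.

Lemma transfer B Cc (G : YY -> bool) : bcg B Cc G ->
  bc_coloring B Cc (fun y : HV => G (Phi y)).
Proof.
case=> [[x Gx] [y Gy] H1 H2]; split.
- by exists (Psi x); rewrite PsiK.
- by exists (Psi y); rewrite PsiK.
- by move=> z Gz; rewrite (card_Phi z (fun Y => ~~ G Y)) H1.
- by move=> z Gz; rewrite (card_Phi z G) H2.
Qed.
End Transfer.

Lemma adj_pair (n Q : nat) (f : hvert n Q -> bool) (x y : hvert n Q) : f x -> ~~ f y ->
  exists u v, [/\ ~~ f u, f v & gadj u v].
Proof.
move=> fx.
move: {2}#|[set i | x i != y i]| (leqnn #|[set i | x i != y i]|) => m.
elim: m y => [|m IH] y hm fy.
  exfalso; move: fy; suff -> : y = x by rewrite fx.
  apply/ffunP=> i; apply/eqP; rewrite eq_sym; apply: contraTT hm => ne; rewrite -ltnNge card_gt0.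
  by apply/set0Pn; exists i; rewrite inE.
have [/set0Pn [i]|e0] := boolP ([set i | x i != y i] != set0); last first.
  by apply: (IH y) => //; move: e0; rewrite negbK => /eqP ->; rewrite cards0.
rewrite inE => ni.
pose y' := upd y i (x i).
have ad : gadj y y' by rewrite gadj_upd.
have [fy'|nfy'] := boolP (f y'); first by exists y, y'.
apply: (IH y') => //.
have sub : [set j | x j != y' j] \subset [set j | x j != y j] :\ i.
  apply/subsetP=> j; rewrite !inE ffunE; have [->|nj] := eqVneq j i; by rewrite ?eqxx.
apply: leq_trans (subset_leq_card sub) _.
by move: hm; rewrite (cardsD1 i [set j | x j != y j]) inE ni.
Qed.

Section Faces.
Variables (n Q k : nat) (f : hvert n Q -> bool) (P : {set {set hvert n Q}}).
Hypothesis HP : partition P [set x | f x].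
Hypothesis HF : forall F, F \in P -> kface k F.

Definition dirF (F : {set hvert n Q}) : {set 'I_n} :=
  odflt set0 [pick S : {set 'I_n} | [exists a : hvert n Q,
     (#|S| == k) && (F == [set y : hvert n Q | [forall i, (i \notin S) ==> (y i == a i)]])]].
Definition Dir (x : hvert n Q) := dirF (pblock P x).

Lemma dirF_spec F : F \in P -> #|dirF F| = k /\
  exists a : hvert n Q, F = [set y : hvert n Q | [forall i, (i \notin dirF F) ==> (y i == a i)]].
Proof.
move=> FP; rewrite /dirF; case: pickP => [S /existsP [a /andP [/eqP cS /eqP eF]] | H] /=.
  by split=> //; exists a.
exfalso; have [S [a [cS eF]]] := HF FP; move: (H S) => /negbT /existsPn /(_ a).
by rewrite cS eF !eqxx.
Qed.

Lemma pblockP x : f x -> pblock P x \in P /\ x \in pblock P x.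
Proof.
move: HP => /and3P [/eqP cov tr _] fx.
have xc : x \in cover P by rewrite cov inE.
by rewrite pblock_mem // mem_pblock.
Qed.

Lemma Dir_card x : f x -> #|Dir x| = k.
Proof. by move=> fx; have [FP _] := pblockP fx; have [] := dirF_spec FP. Qed.

Lemma Dir_face x j v : f x -> j \in Dir x -> f (upd x j v) /\ Dir (upd x j v) = Dir x.
Proof.
move=> fx jD; move: HP => /and3P [/eqP cov tr _].
have [FP xF] := pblockP fx.
have [_ [a eF]] := dirF_spec FP.
rewrite /Dir in jD; move: eF; set S := dirF (pblock P x) => eF.
have uF : upd x j v \in pblock P x.
  move: xF; rewrite eF !inE => /forallP h; apply/forallP=> i.
  apply/implyP=> iS; rewrite ffunE; have [ej|nj] := eqVneq i j.
    by move: iS; rewrite ej jD.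
  by have := h i; rewrite iS.
have fu : f (upd x j v).
  have : upd x j v \in cover P by apply/bigcupP; exists (pblock P x).
  by rewrite cov inE.
split=> //; rewrite /Dir (def_pblock tr FP uF) //.
Qed.
End Faces.

Unset Implicit Arguments. Set Strict Implicit. Set Printing Implicit Defensive.

Section Build.
Variables (n q b c k : nat).
Variable C : {set {ffun 'I_q.+2 -> 'I_q.+1}}.
Hypothesis HC : perfect_code1 C.
Variable f : hvert n q.+1 -> bool.
Hypothesis Hbc : bc_coloring b c f.
Variable P : {set {set hvert n q.+1}}.
Hypothesis HP : partition P [set x | f x].
Hypothesis HF : forall F, F \in P -> kface k F.

Local Notation D := (Dir k P).
Local Notation X := (hvert n q.+1).

Lemma faceD : forall (x : X) j v, f x -> j \in D x -> f (upd x j v) /\ D (upd x j v) = D x.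
Proof. move=> x j v; exact: (@Dir_face n q.+1 k f P HP HF x j v). Qed.

Definition w00 : {ffun 'I_q.+1 -> 'I_q.+1} := [ffun _ => ord0].
Definition wof (s : 'I_q.+1) := upd w00 ord0 (s + cw C w00 ord0)%R.
Definition lift r (x : X) : {ffun ('I_n * 'I_q.+1 + 'I_r)%type -> 'I_q.+1} :=
  [ffun i => match i with inl (j, p) => wof (x j) p | inr _ => ord0 end].

Lemma xo_lift r x : xo C (lift r x) = x.
Proof.
apply/ffunP=> j; rewrite ffunE.
have -> : blk (lift r x) j = wof (x j) by apply/ffunP=> p; rewrite !ffunE.
exact: S_surj.
Qed.

Lemma build (e : bool) (r : nat) : (r + e * (k * q.+1) + n * q = c + b + k * q)%N ->
  forall t, (1 <= t <= q.+1)%N ->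
  bc_coloring (q.+1 * (b + c) - t * c) (t * c)
    (fun y : hvert #|{: 'I_n * 'I_q.+1 + 'I_r}| q.+1 =>
        g C f D e [set a : 'I_q.+1 | a < t] (Phi y)).
Proof.
move=> Hr t /andP [t1 tQ].
set T := [set a : 'I_q.+1 | a < t].
have cT : #|T| = t.
  have winj : injective (widen_ord tQ) by move=> i j /(congr1 val) /= /val_inj.
  have <- : #|[set widen_ord tQ x | x in 'I_t]| = t by rewrite (card_imset _ winj) card_ord.
  apply: eq_card => a; rewrite !inE; apply/idP/imsetP => [lt | [a' _ ->]]; last by rewrite /= ltn_ord.
  by exists (Ordinal lt) => //; apply/val_inj.
have Ht : #|T| <= q.+1 by rewrite cT.
case: Hbc => [[x0 fx0] [y0 fy0] Hb1 Hc1].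
have Hb : forall x, f x -> #|[set x' | gadj x x' & ~~ f x']| = b.
  by move=> x fx; rewrite -(Hb1 x fx); apply: eq_card => y; rewrite !inE.
have Hc : forall x, ~~ f x -> #|[set x' | gadj x x' & f x']| = c.
  by move=> x fx; rewrite -(Hc1 x fx); apply: eq_card => y; rewrite !inE.
have Hk : forall x, f x -> #|D x| = k by move=> x fx; exact: Dir_card HP HF x fx.
apply: transfer; split.
- have [u [v [nfu fv ad]]] := adj_pair fx0 fy0.
  have c1 : (0 < c)%N.
    rewrite -(Hc u nfu) card_gt0; apply/set0Pn; exists v; by rewrite inE ad fv.
  have := V1 HC faceD Hc Hr Ht (Y := lift r u); rewrite xo_lift => /(_ nfu).
  rewrite cT => ec.
  have : (0 < cnt C f D e T (lift r u) true)%N by rewrite ec muln_gt0 t1 c1.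
  rewrite card_gt0 => /set0Pn [Y']; rewrite inE => /andP [_ /eqP gY].
  by exists Y'.
- by exists (lift r y0); rewrite /g xo_lift (negbTE fy0).
- move=> Y /andP [fY hT].
  have := V3 HC faceD Hb Hk Hr Ht fY hT; rewrite cT /cnt => E.
  rewrite (_ : #|_| = #|[set Y' | gadj Y Y' & g C f D e T Y' == false]|); last first.
    by apply: eq_card => Y'; rewrite !inE eqbF_neg.
  rewrite E; have : (t <= q.+1)%N := tQ. nia.
- move=> Y nG.
  rewrite (_ : #|_| = cnt C f D e T Y true); last first.
    by apply: eq_card => Y'; rewrite !inE eqb_id.
  have [fY|nfY] := boolP (f (xo C Y)).
    have hT : hh C D e Y \notin T by move: nG; rewrite /g fY.
    by rewrite (V2 HC faceD Hb Hk Hr Ht fY hT) cT.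
  by rewrite (V1 HC faceD Hc Hr Ht nfY) cT.
Qed.
End Build.

Local Open Scope ring_scope.

Theorem theorem7 (q n b c k : nat) (f : hvert n q -> bool) :
  (exists C : {set hvert q.+1 q}, perfect_code1 C) ->
  bc_coloring b c f ->
  kface_partitionable k f ->
  let lam := main_eig n q b c in
  (lam + k%:Z <= 0 ->
     forall t : nat, (1 <= t <= q)%N ->
       exists m : nat,
         m%:Z = (q * n)%:Z - lam - k%:Z /\
         exists g : hvert m q -> bool,
           bc_coloring (q * (b + c) - t * c) (t * c) g /\
           main_eig m q (q * (b + c) - t * c) (t * c)
             = lam - (k * (q - 1))%:Z)
  /\
  (lam <= (k * (q - 1))%:Z ->
     forall t : nat, (1 <= t <= q)%N ->
       exists m : nat,
         m%:Z = (q * n)%:Z - lam + (k * (q - 1))%:Z /\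
         exists g : hvert m q -> bool,
           bc_coloring (q * (b + c) - t * c) (t * c) g /\
           main_eig m q (q * (b + c) - t * c) (t * c)
             = lam + (k * (q - 1) ^ 2)%:Z).
Proof.
move=> [C HC] Hbc [P [HP HF]] lam.
destruct q as [|q].
  exfalso; case: Hbc => [[x fx] [y fy] _ _].
  have exy : x = y by apply/ffunP=> i; case: (x i) => m; by [].
  by move: fy; rewrite -exy fx.
have Hmain : forall (e : bool) (r : nat), (r + e * (k * q.+1) + n * q = c + b + k * q)%N ->
   forall t, (1 <= t <= q.+1)%N -> exists g : hvert #|{: 'I_n * 'I_q.+1 + 'I_r}| q.+1 -> bool,
     bc_coloring (q.+1 * (b + c) - t * c) (t * c) g.
  move=> e r Hr t Ht; eexists; exact: (@build n q b c k C HC f Hbc P HP HF e r Hr t Ht).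
have cardI r : #|{: 'I_n * 'I_q.+1 + 'I_r}| = (n * q.+1 + r)%N by rewrite card_sum card_prod !card_ord.
rewrite /lam /main_eig; split.
- move=> Hl t Ht.
  have Hle : (n * q + k <= b + c)%N by move: Hl; rewrite subn1 /=; lia.
  pose r := (b + c - (n * q + k))%N.
  have Hr : (r + true * (k * q.+1) + n * q = c + b + k * q)%N by rewrite /r /=; lia.
  have [g Hg] := Hmain true r Hr t Ht.
  exists #|{: 'I_n * 'I_q.+1 + 'I_r}|; split; first by rewrite cardI /r subn1 /=; lia.
  exists g; split => //; rewrite cardI /r !subn1 /=.
  have : (t * c <= q.+1 * (b + c))%N by apply: leq_mul; [case/andP: Ht | rewrite leq_addl].
  nia.
- move=> Hl t Ht.
  have Hle : (n * q <= b + c + k * q)%N by move: Hl; rewrite subn1 /=; lia.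
  pose r := (k * q + b + c - n * q)%N.
  have Hr : (r + false * (k * q.+1) + n * q = c + b + k * q)%N by rewrite /r /=; lia.
  have [g Hg] := Hmain false r Hr t Ht.
  exists #|{: 'I_n * 'I_q.+1 + 'I_r}|; split; first by rewrite cardI /r subn1 /=; lia.
  exists g; split => //; rewrite cardI /r !subn1 /=.
  have : (t * c <= q.+1 * (b + c))%N by apply: leq_mul; [case/andP: Ht | rewrite leq_addl].
  nia.
Qed.
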